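(* Let $I$ be a nonzero proper monomial ideal of $R=K[x_1,\ldots,x_d]$ ($K$ a field), and write $NP(I)=\{\mathbf{x}\in\mathbb{R}^d_+\mid \mathbf{a}_i\cdot\mathbf{x}\ge c_i,\ 1\le i\le s\}$ with $\mathbf{a}_i=(a_{i1},\ldots,a_{id})\in\mathbb{N}^d$, $c_i\in\mathbb{N}$, each inequality defining a facet of $NP(I)$. Then: (1) All jumping numbers for $I$ are rational. (2) For each $r\in\mathbb{R}_+$ there exists $r'\in\mathbb{Q}$ with $\overline{I^r}=\overline{I^{r'}}$; moreover $r'$ can be taken to be a jumping number for $I$. (3) If $r$ is a jumping number for $I$, then $nr$ is a jumping number for $I$ for all $n\in\mathbb{N}$. (4) If $\mathbf{v}=(v_1,\ldots,v_d)$ is a vertex of $NP(I)$, then for all $n\in\mathbb{N}$ the number $r_n=\frac{n}{\gcd(v_1,\ldots,v_d)}$ is a jumping number for $I$. (5) For each $i$ with $c_i\neq0$ let $S_i=\{rc_i \mid r\in\mathbb{R}_+ \text{ and there exists } \mathbf{x}\in\mathbb{N}^d \text{ with } \mathbf{a}_i\cdot\mathbf{x}=rc_i \text{ and } \mathbf{a}_l\cdot\mathbf{x}\ge rc_l \text{ for all } l\neq i\}$. Then each $S_i$ is a submonoid of the additive monoid generated by $a_{i1},\ldots,a_{id}$, and the set $\mathcal{J}$ of jumping numbers for $I$ equals $\bigcup_{c_i\neq0}\frac{1}{c_i}S_i$.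
   Context: $\mathbb{R}_+$ denotes the non-negative reals, $\mathbb{N}$ the non-negative integers, and $\mathbf{x}^{\mathbf{a}}=x_1^{a_1}\cdots x_d^{a_d}$. $NP(I)$ is the convex hull in $\mathbb{R}^d$ of $\{\mathbf{a}\in\mathbb{N}^d\mid \mathbf{x}^{\mathbf{a}}\in I\}$. For real $t\ge0$, the $t$-th real power of $I$ is $\overline{I^t}=(\{\mathbf{x}^{\mathbf{a}}\mid \mathbf{a}\in t\cdot NP(I)\cap\mathbb{N}^d\})$, where $t\cdot NP(I)=\{\mathbf{x}\in\mathbb{R}^d_+\mid \mathbf{a}_i\cdot\mathbf{x}\ge tc_i,\ 1\le i\le s\}$. For $r\ge0$, $\overline{I^{>r}}=\bigcup_{t>r}\overline{I^t}$. A jumping number for $I$ is a real $r\ge0$ with $\overline{I^r}\neq\overline{I^{>r}}$. *)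

(* Defs.v *)
From mathcomp Require Import all_boot all_algebra.
From mathcomp Require Import reals.
From mathcomp Require Import mpoly.
Set Implicit Arguments. Unset Strict Implicit. Unset Printing Implicit Defensive.
Import GRing.Theory Num.Theory.
Local Open Scope ring_scope.

Section RealPowers.
Variables (R : realType) (d : nat) (K : fieldType).

Definition ideal_gen (S : {mpoly K[d]} -> Prop) : {mpoly K[d]} -> Prop :=
  fun p => exists (n : nat) (r g : 'I_n -> {mpoly K[d]}),
    (forall k, S (g k)) /\ p = \sum_(k < n) r k * g k.

Definition is_monomial_ideal (I : {mpoly K[d]} -> Prop) : Prop :=
  exists G : 'X_{1..d} -> Prop,
    forall p, I p <-> ideal_gen (fun q => exists m, G m /\ q = 'X_[m]) p.

Definition same_ideal (I J : {mpoly K[d]} -> Prop) : Prop :=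
  forall p, I p <-> J p.

Definition vec := 'I_d -> R.
Definition dot (a : 'I_d -> nat) (x : vec) : R := \sum_(j < d) (a j)%:R * x j.
Definition mnm_vec (m : 'X_{1..d}) : vec := fun j => (m j)%:R.

Definition conv (S : vec -> Prop) : vec -> Prop :=
  fun x => exists (n : nat) (lam : 'I_n -> R) (p : 'I_n -> vec),
    (forall k, 0 <= lam k) /\ \sum_(k < n) lam k = 1 /\ (forall k, S (p k)) /\
    forall j, x j = \sum_(k < n) lam k * p k j.

Definition NP (I : {mpoly K[d]} -> Prop) : vec -> Prop :=
  conv (fun x => exists m, I 'X_[m] /\ x = mnm_vec m).

(* F contains k+1 affinely independent points *)
Definition aff_dim_ge (F : vec -> Prop) (k : nat) : Prop :=
  exists (p0 : vec) (p : 'I_k -> vec), F p0 /\ (forall l, F (p l)) /\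
    \rank (\matrix_(l < k, j < d) (p l j - p0 j)) = k.

Definition is_facet (P : vec -> Prop) (a : 'I_d -> nat) (c : nat) : Prop :=
  let F := fun x => P x /\ dot a x = c%:R in
  aff_dim_ge F d.-1 /\ ~ aff_dim_ge F d.

Definition is_vertex (P : vec -> Prop) (v : vec) : Prop :=
  P v /\ forall (y z : vec) (l : R), P y -> P z -> 0 < l < 1 ->
    (forall j, v j = l * y j + (1 - l) * z j) -> y = z.

Variables (s : nat) (a : 'I_s -> 'I_d -> nat) (c : 'I_s -> nat).

(* t . NP(I) = { x in R^d_+ | a_i . x >= t c_i for all i } *)
Definition tNP (t : R) : vec -> Prop :=
  fun x => (forall j, 0 <= x j) /\ forall i, t * (c i)%:R <= dot (a i) x.

Definition real_pow (t : R) : {mpoly K[d]} -> Prop :=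
  ideal_gen (fun q => exists m, tNP t (mnm_vec m) /\ q = 'X_[m]).

Definition real_pow_gt (r : R) : {mpoly K[d]} -> Prop :=
  fun p => exists t, r < t /\ real_pow t p.

Definition jumping_number (r : R) : Prop :=
  0 <= r /\ ~ same_ideal (real_pow r) (real_pow_gt r).

Definition S_set (i : 'I_s) : R -> Prop :=
  fun y => exists r : R, 0 <= r /\ y = r * (c i)%:R /\
    exists m : 'X_{1..d}, dot (a i) (mnm_vec m) = r * (c i)%:R /\
      forall l, l != i -> r * (c l)%:R <= dot (a l) (mnm_vec m).

Definition gen_monoid (i : 'I_s) : R -> Prop :=
  fun y => exists k : 'I_d -> nat, y = (\sum_(j < d) k j * a i j)%N%:R.

End RealPowers.

Definition is_rational (R : realType) (r : R) : Prop := exists q : rat, r = ratr q.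

Arguments NP R {d K} I _.
Arguments jumping_number {R d} K {s} a c r.
Arguments real_pow {R d} K {s} a c t _.
Arguments real_pow_gt {R d} K {s} a c r _.

(* Main.v *)
Require Import Defs.
From mathcomp Require Import all_boot all_algebra.
From mathcomp Require Import reals.
From mathcomp Require Import mpoly.
From mathcomp.algebra_tactics Require Import ring lra.
From Stdlib Require Import Classical IndefiniteDescription FunctionalExtensionality ClassicalEpsilon.
Import GRing.Theory Num.Theory order.Order.TTheory.
Local Open Scope ring_scope.

Lemma pos_min (R : realType) n (f : 'I_n -> R) :
  (forall i, 0 < f i) -> exists e : R, 0 < e /\ forall i, e <= f i.
Proof.
move=> fp.
have S0 : 0 <= \sum_i (f i)^-1 by apply: sumr_ge0 => i _; rewrite invr_ge0 ltW.
have p1 : 0 < 1 + \sum_i (f i)^-1 by rewrite ltr_wpDr.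
exists (1 + \sum_i (f i)^-1)^-1; split; first by rewrite invr_gt0.
move=> i; rewrite -(invrK (f i)) lef_pV2 ?posrE ?invr_gt0 //.
rewrite (bigD1 i) //= addrCA ler_wpDr // addr_ge0 //.
by apply: sumr_ge0 => k _; rewrite invr_ge0 ltW.
Qed.


Lemma pos_min_rel (R : realType) n (Q : 'I_n -> R -> Prop) :
  (forall i, exists e, 0 < e /\ forall e', 0 < e' <= e -> Q i e') ->
  exists e : R, 0 < e /\ forall i, Q i e.
Proof.
move=> h.
pose f i := proj1_sig (constructive_indefinite_description _ (h i)).
have fP i : 0 < f i /\ forall e', 0 < e' <= f i -> Q i e'.
  by rewrite /f; case: constructive_indefinite_description.
have [e [e0 he]] := @pos_min R n f (fun i => proj1 (fP i)).
by exists e; split=> // i; apply: (proj2 (fP i)); rewrite e0 he.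
Qed.

Section H.
Variables (R : realType) (d : nat) (K : fieldType) (s : nat) (a : 'I_s -> 'I_d -> nat) (c : 'I_s -> nat).

Lemma dot_ge0 (b : 'I_d -> nat) (x : vec R d) : (forall j, 0 <= x j) -> 0 <= dot b x.
Proof. by move=> h; apply: sumr_ge0 => j _; rewrite mulr_ge0. Qed.

Lemma dot_mnm (b : 'I_d -> nat) (m : 'X_{1..d}) :
  dot b (mnm_vec R m) = (\sum_(j < d) b j * m j)%N%:R.
Proof. by rewrite /dot natr_sum; apply: eq_bigr => j _; rewrite natrM. Qed.

Lemma mnm_vec_ge0 (m : 'X_{1..d}) j : 0 <= mnm_vec R m j.
Proof. by rewrite /mnm_vec ler0n. Qed.

Lemma dot_le (b : 'I_d -> nat) (m m' : 'X_{1..d}) : (m <= m')%MM ->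
  dot b (mnm_vec R m) <= dot b (mnm_vec R m').
Proof.
move/mnm_lepP=> h; rewrite !dot_mnm ler_nat; apply: leq_sum => j _.
by rewrite leq_mul2l h orbT.
Qed.

Lemma tNP_anti (t t' : R) (x : vec R d) : t <= t' -> tNP a c t' x -> tNP a c t x.
Proof.
move=> tt [h1 h2]; split=> // i; apply: le_trans (h2 i).
by rewrite ler_wpM2r.
Qed.

Lemma tNP_up (t : R) (m m' : 'X_{1..d}) : (m <= m')%MM ->
  tNP a c t (mnm_vec R m) -> tNP a c t (mnm_vec R m').
Proof.
move=> le [_ h]; split; first exact: mnm_vec_ge0.
move=> i; apply: le_trans (h i) _; exact: dot_le.
Qed.

Lemma coefMX_le (p : {mpoly K[d]}) (m k : 'X_{1..d}) :
  (p * 'X_[m])@_k != 0 -> (m <= k)%MM.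
Proof.
rewrite -mcoeff_msupp (perm_mem (msuppMX p m)) => /mapP [m' _ ->].
exact: lem_addr.
Qed.

Lemma ideal_gen_mono (P : 'X_{1..d} -> Prop) (m : 'X_{1..d}) :
  ideal_gen (fun q => exists m', P m' /\ q = 'X_[m']) ('X_[m] : {mpoly K[d]}) ->
  exists m', P m' /\ (m' <= m)%MM.
Proof.
move=> [n [r [g [hg e]]]].
have : ('X_[m] : {mpoly K[d]})@_m != 0 by rewrite mcoeffX eqxx oner_neq0.
rewrite e raddf_sum /= => nz.
have [k hk] : exists k, (r k * g k)@_m != 0.
  apply/existsP; apply: contraT; rewrite negb_exists => /forallP h.
  move: nz; rewrite big1 ?eqxx // => k _; by move: (h k); rewrite negbK => /eqP.
case: (hg k) => m' [Pm' gk]; exists m'; split=> //.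
by move: hk; rewrite gk; apply: coefMX_le.
Qed.

Lemma ideal_gen_X (P : 'X_{1..d} -> Prop) (m : 'X_{1..d}) : P m ->
  ideal_gen (fun q => exists m', P m' /\ q = 'X_[m']) ('X_[m] : {mpoly K[d]}).
Proof.
move=> Pm; exists 1%N, (fun _ => 1), (fun _ => 'X_[m]); split.
  by move=> _; exists m.
by rewrite big_ord1 mul1r.
Qed.

Lemma real_pow_X (t : R) (m : 'X_{1..d}) : real_pow K a c t 'X_[m] <-> tNP a c t (mnm_vec R m).
Proof.
split; last exact: ideal_gen_X.
by move/ideal_gen_mono => [m' [h le]]; apply: tNP_up le h.
Qed.


Lemma push_up (r : R) (m : 'X_{1..d}) : tNP a c r (mnm_vec R m) ->
  (forall i, (0 < c i)%N -> dot (a i) (mnm_vec R m) != r * (c i)%:R) ->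
  exists e, 0 < e /\ forall e', 0 < e' <= e -> tNP a c (r + e') (mnm_vec R m).
Proof.
move=> [h0 h] hne.
pose f i := if (0 < c i)%N then (dot (a i) (mnm_vec R m) - r * (c i)%:R) / (c i)%:R else 1.
have fp i : 0 < f i.
  rewrite /f; case: ifP => ci //; rewrite divr_gt0 ?ltr0n // subr_gt0 lt_def.
  by rewrite (hne _ ci) h.
have [e [e0 he]] := @pos_min R s f fp.
exists e; split=> // e' /andP [e'0 e'e]; split=> // i.
move: (he i); rewrite /f; case: ifP => ci fi.
  rewrite mulrDl -lerBrDl; apply: le_trans (_ : e * (c i)%:R <= _).
    by rewrite ler_wpM2r.
  by rewrite -ler_pdivlMr ?ltr0n.
move: ci; rewrite lt0n => /negbFE/eqP ->; rewrite mulr0.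
by apply: dot_ge0.
Qed.

Lemma real_pow_anti (t t' : R) p : t <= t' -> real_pow K a c t' p -> real_pow K a c t p.
Proof.
move=> tt [n [r [g [hg e]]]]; exists n, r, g; split=> // k.
by case: (hg k) => m [hm gk]; exists m; split=> //; apply: tNP_anti hm.
Qed.

Lemma jumpP (r : R) : jumping_number K a c r <->
  0 <= r /\ exists i m, (0 < c i)%N /\ tNP a c r (mnm_vec R m) /\
     dot (a i) (mnm_vec R m) = r * (c i)%:R.
Proof.
split.
  move=> [r0 hn]; split=> //; apply: NNPP => hno; apply: hn => p; split; last first.
    by move=> [t [rt hp]]; apply: real_pow_anti hp; rewrite ltW.
  move=> [n [rr [g [hg e]]]].
  have hk k : exists e, 0 < e /\ forall e', 0 < e' <= e ->
      (exists m, tNP a c (r + e') (mnm_vec R m) /\ g k = 'X_[m]).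
    case: (hg k) => m [hm gk].
    have [|e0 [e0p he0]] := @push_up r m hm.
      move=> i ci; apply/eqP => eq; apply: hno; exists i, m; split=> //.
    by exists e0; split=> // e' he'; exists m; split=> //; apply: he0.
  have [e0 [e0p he0]] := @pos_min_rel R n _ hk.
  exists (r + e0); split; first by rewrite ltrDl.
  by exists n, rr, g.
move=> [r0 [i [m [ci [hm heq]]]]]; split=> // hs.
have : real_pow K a c r 'X_[m] by apply/real_pow_X.
move/hs => [t [rt /real_pow_X [_ ht]]].
move: (ht i); rewrite heq ler_pM2r ?ltr0n // => tr.
by move: (lt_le_trans rt tr); rewrite ltxx.
Qed.


Lemma dot_scale (b : 'I_d -> nat) (t : R) (v : vec R d) :
  dot b (fun j => t * v j) = t * dot b v.
Proof. by rewrite /dot mulr_sumr; apply: eq_bigr => j _; rewrite mulrCA. Qed.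

Lemma dot_add (b : 'I_d -> nat) (v w : vec R d) :
  dot b (fun j => v j + w j) = dot b v + dot b w.
Proof. by rewrite /dot -big_split; apply: eq_bigr => j _; rewrite mulrDr. Qed.

Lemma dot_delta (b : 'I_d -> nat) (t : R) j :
  dot b (fun k => t * (k == j)%:R) = t * (b j)%:R.
Proof.
rewrite /dot (bigD1 j) //= eqxx mulr1 big1; first by rewrite addr0 mulrC.
by move=> k /negbTE ->; rewrite !mulr0.
Qed.

Lemma mnm_vec_mulmn (m : 'X_{1..d}) n :
  mnm_vec R (m *+ n)%MM = (fun j => n%:R * mnm_vec R m j).
Proof. by apply: functional_extensionality => j; rewrite /mnm_vec mulmnE natrM mulrC. Qed.

Lemma mnm_vec_add (m m' : 'X_{1..d}) :
  mnm_vec R (m + m')%MM = (fun j => mnm_vec R m j + mnm_vec R m' j).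
Proof. by apply: functional_extensionality => j; rewrite /mnm_vec mnmDE natrD. Qed.

Lemma dot_mnm0 (b : 'I_d -> nat) : dot b (mnm_vec R 0%MM) = 0.
Proof. by rewrite /dot big1 // => j _; rewrite /mnm_vec mnm0E mulr0. Qed.

End H.

Section H2.
Variables (R : realType) (d : nat) (K : fieldType) (s : nat) (a : 'I_s -> 'I_d -> nat) (c : 'I_s -> nat).
Variable (I : {mpoly K[d]} -> Prop).

Lemma NP0 : ~ I 1 -> ~ NP R I (mnm_vec R 0%MM).
Proof.
move=> nI [n [lam [p [hl [hs [hp hx]]]]]].
have [k lk] : exists k, lam k != 0.
  apply: NNPP => h; move: hs; rewrite big1 => [/eqP|k _].
    by rewrite eq_sym oner_eq0.
  by apply: NNPP => h'; apply: h; exists k; apply/eqP.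
case: (hp k) => m [Im pk]; apply: nI; rewrite -mpolyX0.
suff <- : m = 0%MM by [].
apply/mnmP => j; rewrite mnm0E.
have := hx j; rewrite /mnm_vec mnm0E => /esym/eqP.
rewrite psumr_eq0 => [/allP/(_ k)|i _]; last first.
  by rewrite mulr_ge0 //; case: (hp i) => m' [_ ->]; rewrite /mnm_vec ler0n.
rewrite mem_index_enum /= pk /mnm_vec mulf_eq0 (negbTE lk) /= pnatr_eq0.
by move=> /(_ isT) /eqP.
Qed.

Lemma mono_in_I : is_monomial_ideal I -> (exists p, I p /\ p != 0) ->
  exists m, I 'X_[m].
Proof.
move=> [G hG] [p [Ip pn0]].
case/hG: Ip => n [r [g [hg e]]].
case: n r g hg e => [|n] r g hg e.
  by move: pn0; rewrite e big_ord0 eqxx.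
case: (hg ord0) => m [Gm _]; exists m; apply/hG.
exact: (@ideal_gen_X d K G m Gm).
Qed.

Lemma NP_X m : I 'X_[m] -> NP R I (mnm_vec R m).
Proof.
move=> Im; exists 1%N, (fun _ => 1), (fun _ => mnm_vec R m).
split=> //; split; first by rewrite big_ord1.
split; first by move=> _; exists m.
by move=> j; rewrite big_ord1 mul1r.
Qed.

End H2.

Section H3.
Variables (R : realType) (d : nat) (K : fieldType) (s : nat) (a : 'I_s -> 'I_d -> nat) (c : 'I_s -> nat).

Lemma cnz i : (0 < c i)%N -> (c i)%:R != 0 :> R.
Proof. by rewrite pnatr_eq0 -lt0n. Qed.

Lemma part1 (r : R) : jumping_number K a c r -> is_rational r.
Proof.
move/jumpP => [r0 [i [m [ci [hm heq]]]]].
move: heq; rewrite dot_mnm => heq.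
exists ((\sum_(j < d) a i j * m j)%N%:R / (c i)%:R).
by rewrite fmorph_div !rmorph_nat heq mulfK // cnz.
Qed.

Lemma part3 (r : R) (n : nat) : jumping_number K a c r ->
  jumping_number K a c (n%:R * r).
Proof.
move/jumpP => [r0 [i [m [ci [[_ hm] heq]]]]]; apply/jumpP.
split; first by rewrite mulr_ge0.
exists i, (m *+ n)%MM; split=> //; rewrite mnm_vec_mulmn; split; last first.
  by rewrite dot_scale heq mulrA.
split; first by move=> j; rewrite mulr_ge0 // mnm_vec_ge0.
by move=> l; rewrite dot_scale -mulrA ler_wpM2l.
Qed.

Lemma part5a i : c i != 0%N ->
     (forall y : R, S_set a c i y -> gen_monoid a i y) /\
     S_set a c i (0 : R) /\
     (forall y z : R, S_set a c i y -> S_set a c i z -> S_set a c i (y + z)).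
Proof.
move=> ci; split.
  move=> y [r [r0 [-> [m [e _]]]]]; exists (fun j => m j).
  rewrite -e dot_mnm; congr (_%:R); apply: eq_bigr => j _; exact: mulnC.
split.
  exists 0; split=> //; split; first by rewrite mul0r.
  exists 0%MM; rewrite dot_mnm0 mul0r; split=> // l _; rewrite dot_mnm0 mul0r.
  done.
move=> y z [r [r0 [-> [m [e h]]]]] [r' [r0' [-> [m' [e' h']]]]].
exists (r + r'); split; first by rewrite addr_ge0.
split; first by rewrite mulrDl.
exists (m + m')%MM; rewrite mnm_vec_add dot_add e e' mulrDl; split=> //.
by move=> l hl; rewrite dot_add mulrDl lerD // ?h ?h'.
Qed.

Lemma part5b (r : R) : jumping_number K a c r <->
     exists i (y : R), c i != 0%N /\ S_set a c i y /\ r = y / (c i)%:R.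
Proof.
split.
  move/jumpP => [r0 [i [m [ci [[_ hm] heq]]]]].
  exists i, (r * (c i)%:R); split; first by rewrite -lt0n.
  split; last by rewrite mulfK // cnz.
  exists r; split=> //; split=> //; exists m; split=> // l _.
move=> [i [y [ci [[r' [r0 [ey [m [e h]]]]] ->]]]].
have cpos : (0 < c i)%N by rewrite lt0n.
rewrite ey mulfK ?cnz //; apply/jumpP; split=> //; exists i, m; split=> //.
split=> //; split; first exact: mnm_vec_ge0.
move=> l; case: (eqVneq l i) => [->|hl]; first by rewrite e.
exact: h.
Qed.

End H3.

Section H4.
Variables (R : realType) (d : nat) (K : fieldType) (s : nat) (a : 'I_s -> 'I_d -> nat) (c : 'I_s -> nat).
Variable (I : {mpoly K[d]} -> Prop).

Lemma tight (hNP : forall x : vec R d, NP R I x <->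
     ((forall j, 0 <= x j) /\ forall i, (c i)%:R <= dot (a i) x)) (nI : ~ I 1)
  (m : 'X_{1..d}) : is_vertex (NP R I) (mnm_vec R m) ->
  exists i, (0 < c i)%N /\ dot (a i) (mnm_vec R m) = (c i)%:R.
Proof.
move=> [Pm hv]; have [_ hge] := (hNP _).1 Pm.
apply: NNPP => hno.
have hne i : (0 < c i)%N -> dot (a i) (mnm_vec R m) != (c i)%:R.
  by move=> ci; apply/eqP => e; apply: hno; exists i.
have [j mj] : exists j, (0 < m j)%N.
  apply: NNPP => h; apply: (@NP0 R d K I nI); suff <- : m = 0%MM by [].
  apply/mnmP => j; rewrite mnm0E; apply/eqP; rewrite -leqn0 leqNgt.
  by apply/negP => hj; apply: h; exists j.
pose f i := if (0 < c i)%N then (dot (a i) (mnm_vec R m) - (c i)%:R) / ((a i j)%:R + 1) else 1.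
have fp i : 0 < f i.
  rewrite /f; case: ifP => ci //; apply: divr_gt0; last by rewrite ltr_wpDl ?ler0n.
  rewrite subr_gt0 lt_def.
  by rewrite (hne _ ci) hge.
have [e [e0 he]] := @pos_min R s f fp.
pose eps := Num.min e 1.
have eps0 : 0 < eps by rewrite lt_min e0 ltr01.
have epse : eps <= e by rewrite ge_min lexx.
have eps1 : eps <= 1 by rewrite ge_min lexx orbT.
pose y := fun k => mnm_vec R m k + eps * (k == j)%:R.
pose z := fun k => mnm_vec R m k + (- eps) * (k == j)%:R.
have zpos k : 0 <= z k.
  rewrite /z; case: (eqVneq k j) => [->|hk]; last by rewrite mulr0 addr0 mnm_vec_ge0.
  rewrite mulr1 subr_ge0 /mnm_vec; apply: (le_trans eps1); by rewrite ler1n.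
have := hv y z (2^-1) _ _ _ _.
have yz : y j != z j.
  rewrite /y /z eqxx mulr1 mulr1; apply/eqP => h.
  have : eps = - eps by apply: (addrI (mnm_vec R m j)).
  move/eqP; rewrite -subr_eq0 opprK -mulr2n mulrn_eq0 /=; move/eqP => h0.
  by move: eps0; rewrite h0 ltxx.
move=> h; move: yz; rewrite h; first by rewrite eqxx.
- apply/hNP; split.
    move=> k; rewrite /y; apply: addr_ge0; [exact: mnm_vec_ge0 | by exact: mulr_ge0 (ltW eps0) (ler0n _ _)].
  move=> i; rewrite /y dot_add dot_delta; apply: le_trans (hge i) _.
  by rewrite lerDl; exact: mulr_ge0 (ltW eps0) (ler0n _ _).
- apply/hNP; split=> // i.
  case ci: (0 < c i)%N; last first.
    move: ci; rewrite lt0n => /negbFE/eqP ->; exact: dot_ge0.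
  rewrite /z dot_add dot_delta.
  have := he i; rewrite /f ci ler_pdivlMr ?ltr_wpDl ?ler0n // => hh.
  have : eps * ((a i j)%:R + 1) <= dot (a i) (mnm_vec R m) - (c i)%:R.
    apply: le_trans hh; rewrite ler_wpM2r // ?addr_ge0 ?ler0n //.
  have : 0 <= eps by rewrite ltW.
  lra.
- lra.
- by move=> k; rewrite /y /z; lra.
Qed.

End H4.

Section H5.
Variables (R : realType) (d : nat) (K : fieldType) (s : nat) (a : 'I_s -> 'I_d -> nat) (c : 'I_s -> nat).
Variable (I : {mpoly K[d]} -> Prop).
Variable (hNP : forall x : vec R d, NP R I x <->
     ((forall j, 0 <= x j) /\ forall i, (c i)%:R <= dot (a i) x)).
Variable (nI : ~ I 1).

Lemma cpos : exists i, (0 < c i)%N.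
Proof.
apply: NNPP => h; apply: (@NP0 R d K I nI); apply/hNP; split.
  exact: mnm_vec_ge0.
move=> i; have : ~~ (0 < c i)%N by apply/negP => ci; apply: h; exists i.
rewrite lt0n negbK => /eqP ->; apply: dot_ge0; exact: mnm_vec_ge0.
Qed.

Lemma part4 (m : 'X_{1..d}) : is_vertex (NP R I) (mnm_vec R m) ->
     forall n : nat,
       jumping_number K a c ((n%:R : R) / (\big[gcdn/0%N]_(j < d) m j)%:R).
Proof.
move=> hv n; have [i [ci ti]] := @tight R d K s a c I hNP nI m hv.
have [_ hge] := (hNP _).1 hv.1.
set g := \big[gcdn/0%N]_(j < d) m j.
pose x := [multinom n * (m j %/ g) | j < d]%N.
have hx : mnm_vec R x = (fun j => n%:R / g%:R * mnm_vec R m j).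
  apply: functional_extensionality => j; rewrite /mnm_vec mnmE natrM.
  case: (posnP g) => [g0|gp].
    by rewrite g0 divn0 invr0 !mulr0 mul0r.
  rewrite natr_div; last by rewrite unitfE pnatr_eq0 -lt0n.
    by rewrite mulrA [RHS]mulrAC.
  by rewrite /g (bigD1 j) //= dvdn_gcdl.
have ng0 : 0 <= (n%:R : R) / g%:R by apply: divr_ge0; exact: ler0n.
apply/jumpP; split=> //.
exists i, x; split=> //; rewrite hx; split; last by rewrite dot_scale ti.
split; first by move=> j; apply: mulr_ge0 => //; exact: mnm_vec_ge0.
by move=> l; rewrite dot_scale; apply: ler_wpM2l => //; exact: hge.
Qed.

End H5.

Lemma ex_min_nat (P : nat -> Prop) : (exists k, P k) ->
  exists k, P k /\ forall k', P k' -> (k <= k')%N.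
Proof.
move=> hex.
pose Pb k := if excluded_middle_informative (P k) then true else false.
have PbP k : Pb k <-> P k by rewrite /Pb; case: excluded_middle_informative.
have hexb : exists k, Pb k by case: hex => k hk; exists k; apply/PbP.
case: (ex_minnP hexb) => k hk kmin; exists k; split; first exact/PbP.
by move=> k' /PbP; apply: kmin.
Qed.

Section H6.
Variables (R : realType) (d : nat) (K : fieldType) (s : nat) (a : 'I_s -> 'I_d -> nat) (c : 'I_s -> nat).
Variable (I : {mpoly K[d]} -> Prop).
Variable (hNP : forall x : vec R d, NP R I x <->
     ((forall j, 0 <= x j) /\ forall i, (c i)%:R <= dot (a i) x)).
Variable (nI : ~ I 1).
Variable (hmono : is_monomial_ideal I).
Variable (hnz : exists p, I p /\ p != 0).

Lemma part2 (r : R) : 0 <= r ->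
  exists q : rat, jumping_number K a c (ratr q : R) /\
                      same_ideal (real_pow K a c r) (real_pow K a c (ratr q : R)).
Proof.
move=> r0.
have [m0 Im0] := @mono_in_I d K I hmono hnz.
have [_ h0] := (hNP _).1 (@NP_X R d K I m0 Im0).
have [i0 ci0] := @cpos R d K s a c I hNP nI.
pose L := (\prod_(i < s | (0 < c i)%N) c i)%N.
have Lpos : (0 < L)%N by apply: prodn_cond_gt0.
have cL i : (0 < c i)%N -> (c i %| L)%N.
  by move=> ci; rewrite /L (bigD1 i) //= dvdn_mulr.
pose val (m : 'X_{1..d}) i := ((\sum_(j < d) a i j * m j) * (L %/ c i))%N.
have valE m i : (0 < c i)%N ->
    (val m i)%:R / L%:R = dot (a i) (mnm_vec R m) / (c i)%:R :> R.
  move=> ci; have Dp : (0 < L %/ c i)%N by rewrite divn_gt0 // dvdn_leq // cL.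
  rewrite /val dot_mnm -{2}(divnK (cL i ci)) !natrM invfM mulrA mulfK //.
  by rewrite pnatr_eq0 -lt0n.
pose P k := exists m i, (0 < c i)%N /\ tNP a c r (mnm_vec R m) /\ k = val m i.
have exP : exists k, P k.
  have [N hN] : exists N : nat, r < N%:R by exists (Num.bound r); exact: archi_boundP.
  exists (val (m0 *+ N)%MM i0), (m0 *+ N)%MM, i0; split=> //; split=> //.
  rewrite mnm_vec_mulmn; split.
    by move=> j; apply: mulr_ge0; [exact: ler0n | exact: mnm_vec_ge0].
  move=> l; rewrite dot_scale; apply: (@le_trans _ _ (N%:R * (c l)%:R)).
    by apply: ler_wpM2r; [exact: ler0n | exact: ltW].
  by apply: ler_wpM2l; [exact: ler0n | exact: h0].
have [k [[m [i [ci [hm ek]]]] kmin]] := @ex_min_nat P exP.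
have qE : (k%:R / L%:R : R) = dot (a i) (mnm_vec R m) / (c i)%:R by rewrite ek valE.
have key x : tNP a c r (mnm_vec R x) -> tNP a c (k%:R / L%:R) (mnm_vec R x).
  move=> hx; split; first exact: mnm_vec_ge0.
  move=> l; case cl: (0 < c l)%N; last first.
    move: cl; rewrite lt0n => /negbFE/eqP ->; rewrite mulr0.
    apply: dot_ge0; exact: mnm_vec_ge0.
  have kle := kmin (val x l) (ex_intro _ x (ex_intro _ l (conj cl (conj hx erefl)))).
  rewrite -ler_pdivlMr ?ltr0n // -(valE x l cl) ler_pM2r ?invr_gt0 ?ltr0n //.
  by rewrite ler_nat.
have rq : r <= k%:R / L%:R.
  by rewrite qE ler_pdivlMr ?ltr0n //; case: hm => _ /(_ i).
exists (k%:R / L%:R); rewrite fmorph_div !rmorph_nat; split.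
  apply/jumpP; split; first exact: le_trans rq.
  exists i, m; split=> //; split; first exact: key.
  by rewrite qE mulfVK // cnz.
move=> p; split; last exact: real_pow_anti.
move=> [n [rr [g [hg e]]]]; exists n, rr, g; split=> // j.
by case: (hg j) => x [hx ->]; exists x; split=> //; exact: key.
Qed.

End H6.

Theorem theorem5p9 (R : realType) (d : nat) (K : fieldType)
  (I : {mpoly K[d]} -> Prop)
  (s : nat) (a : 'I_s -> 'I_d -> nat) (c : 'I_s -> nat) :
  is_monomial_ideal I ->
  (exists p, I p /\ p != 0) ->
  ~ I 1 ->
  (forall x : vec R d, NP R I x <->
     ((forall j, 0 <= x j) /\ forall i, (c i)%:R <= dot (a i) x)) ->
  (forall i, is_facet (NP R I) (a i) (c i)) ->
  (* (1) *)
  (forall r : R, jumping_number K a c r -> is_rational r) /\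
  (* (2) *)
  (forall r : R, 0 <= r ->
     (exists q : rat, same_ideal (real_pow K a c r) (real_pow K a c (ratr q : R))) /\
     (exists q : rat, jumping_number K a c (ratr q : R) /\
                      same_ideal (real_pow K a c r) (real_pow K a c (ratr q : R)))) /\
  (* (3) *)
  (forall (r : R) (n : nat), jumping_number K a c r ->
     jumping_number K a c (n%:R * r)) /\
  (* (4) *)
  (forall m : 'X_{1..d}, is_vertex (NP R I) (mnm_vec R m) ->
     forall n : nat,
       jumping_number K a c ((n%:R : R) / (\big[gcdn/0%N]_(j < d) m j)%:R)) /\
  (* (5) *)
  (forall i, c i != 0%N ->
     (forall y : R, S_set a c i y -> gen_monoid a i y) /\
     S_set a c i (0 : R) /\
     (forall y z : R, S_set a c i y -> S_set a c i z -> S_set a c i (y + z))) /\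
  (forall r : R, jumping_number K a c r <->
     exists i (y : R), c i != 0%N /\ S_set a c i y /\ r = y / (c i)%:R).
Proof.
move=> hmono hnz nI hNP _.
split; first exact: part1.
split.
  move=> r r0; have [q hq] := @part2 R d K s a c I hNP nI hmono hnz r r0.
  by split; [exists q; exact: hq.2 | exists q].
split; first by move=> r n; exact: part3.
split; first exact: (@part4 R d K s a c I hNP nI).
split; first exact: part5a.
exact: part5b.
Qed.
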